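(* Let $R$ be a commutative ring and let $G=\{g_1=e,g_2,\dots,g_n\}$ be a finite group of order $n>1$ with this fixed listing of its elements. Then $\sigma(v)$ is symmetric for every $v\in RG$ if and only if $G$ is an abelian group of exponent $2$.
   Context: For $v=\sum_{g\in G}\alpha_g g\in RG$, $\sigma(v)$ is the $n\times n$ matrix over $R$ whose $(i,j)$ entry is $\alpha_{g_i^{-1}g_j}$. *)

(* Defs.v *)
From HB Require Import structures.
From mathcomp Require Import all_boot all_order all_algebra all_fingroup.
Set Implicit Arguments. Unset Strict Implicit. Unset Printing Implicit Defensive.
Import GRing.Theory.
Local Open Scope ring_scope.

(* An element v = \sum_g alpha_g g of the group ring RG is represented by its
   coefficient function alpha : {ffun gT -> R}. *)
Definition sigma (R : nzRingType) (gT : finGroupType) (n : nat)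
  (g : 'I_n -> gT) (v : {ffun gT -> R}) : 'M[R]_n :=
  \matrix_(i < n, j < n) v ((g i)^-1 * g j)%g.

(* Main.v *)
Require Import Defs.
From HB Require Import structures.
From mathcomp Require Import all_boot all_order all_algebra all_fingroup all_solvable.
Import GRing.Theory.
Local Open Scope ring_scope.

Lemma invol_iff (gT : finGroupType) (h1 : exists x : gT, x != 1%g) :
  (forall x : gT, (x^-1)%g = x) <->
  (abelian [set: gT] /\ exponent [set: gT] = 2%N).
Proof.
split.
- move=> Hinv; split.
  + apply/centsP => x _ y _.
    rewrite /commute -{1}(Hinv (x * y)%g) invMg Hinv Hinv //.
  + have Hd : (exponent [set: gT] %| 2)%N.
      apply/exponentP => x _.
      by rewrite expgS expg1 -{1}(Hinv x) mulVg.
    have := expg_exponent (in_setT (xchoose h1)).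
    have := xchooseP h1.
    move: Hd; case: (exponent _) => [|[|[|k]]] //.
    by move=> _ H1; rewrite expg1 => H2; rewrite H2 eqxx in H1.
- case=> _ E x.
  apply/eqP; rewrite eq_invg_mul.
  by have := expg_exponent (in_setT x); rewrite E expgS expg1 => ->.
Qed.

Theorem mainTheorem4 (R : comNzRingType) (gT : finGroupType) (n : nat)
  (g : 'I_n -> gT)
  (hn : (1 < n)%N)
  (hbij : bijective g)
  (he : forall i : 'I_n, nat_of_ord i = 0%N -> g i = 1%g) :
  (forall v : {ffun gT -> R}, (sigma g v)^T = sigma g v) <->
  (abelian [set: gT] /\ exponent [set: gT] = 2%N).
Proof.
have n0 : (0 < n)%N by apply: ltn_trans hn.
pose i0 : 'I_n := Ordinal n0.
pose i1 : 'I_n := Ordinal hn.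
have g0 : g i0 = 1%g by apply: he.
case: hbij => ginv gK Kg.
have hx : exists x : gT, x != 1%g.
  exists (g i1); apply/eqP => E.
  have : ginv (g i1) = ginv (g i0) by rewrite E g0.
  by rewrite !gK => /(congr1 val).
have HH := @invol_iff gT hx.
suff : (forall v : {ffun gT -> R}, (sigma g v)^T = sigma g v) <-> (forall x : gT, (x^-1)%g = x) by clear -HH; tauto.
split.
- move=> H x.
  pose v : {ffun gT -> R} := [ffun y => if y == x then 1 else 0].
  have := congr1 (fun M : 'M[R]_n => M i0 (ginv x)) (H v).
  rewrite !mxE /v !ffunE Kg g0 invg1 mulg1 mul1g eqxx.
  case: eqP => [|_] //.
  by move=> /esym/eqP; rewrite oner_eq0.
- move=> Hinv v; apply/matrixP => i j.
  by rewrite !mxE -{1}(Hinv ((g j)^-1 * g i)%g) invMg invgK.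
Qed.
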